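(* Let $\mathbf A$ be a regular BBL transformation with matrix Laurent polynomial $A(w,w^{-1})$ of bandwidth $(p,q)$, and write $\det A(w,w^{-1})=c\,w^{dp}\prod_{\ell=0}^n(w-z_\ell)^{s_\ell}$ with $c\neq0$, $z_0=0$ ($s_0=0$ if $0$ is not a root) and $z_1,\dots,z_n$ the distinct nonzero roots with multiplicities $s_\ell$. Then: (i) $\ker\mathbf A=\bigoplus_{\ell=1}^n\big(\ker\mathbf A\cap\mathcal T_{z_\ell,s_\ell}\big)$, and under the isomorphism $\mathbb C^{ds}\ni(u_1,\dots,u_s)\mapsto\sum_{v=1}^s\Phi_{z,v}u_v\in\mathcal T_{z,s}$, $\ker\mathbf A\cap\mathcal T_{z_\ell,s_\ell}$ corresponds to $\ker A_{s_\ell}(z_\ell)$; in particular $\ker\mathbf A$ is finite-dimensional; (ii) for every $\ell=1,\dots,n$, $\dim\ker A(z_\ell,z_\ell^{-1})\le\dim\ker A_{s_\ell}(z_\ell)=s_\ell$. Moreover, if equality $\dim\ker A(z_\ell,z_\ell^{-1})=s_\ell$ holds in (ii), then $\ker\mathbf A\cap\mathcal T_{z_\ell,s_\ell}=\operatorname{Span}\{\Phi_{z_\ell,1}u_s\}_{s=1}^{s_\ell}$, where $\{u_s\}_{s=1}^{s_\ell}$ is any basis of $\ker A(z_\ell,z_\ell^{-1})$.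
   Context: Fix $d\ge1$. $\mathcal V^S_d$: doubly infinite sequences $\{\psi_j\}_{j\in\mathbb Z}$, $\psi_j\in\mathbb C^d$; $\mathbf T$ the left shift $(\mathbf T\Psi)_j=\psi_{j+1}$. A matrix Laurent polynomial of bandwidth $(p,q)$ is $A(w,w^{-1})=\sum_{r=p}^qa_rw^r$, $a_r$ complex $d\times d$ matrices, $a_p\ne0\ne a_q$; its BBL transformation is $(\mathbf A\Psi)_j=\sum_ra_r\psi_{j+r}$. $\mathbf A$ is regular if $\det(w^{-p}A(w,w^{-1}))$ is not the zero polynomial. For $z\ne0$, $v\ge1$: $\Phi_{z,v}=\{j^{(v-1)}z^{j-v+1}\}_{j\in\mathbb Z}$ with $j^{(0)}=1$, $j^{(k)}=j(j-1)\cdots(j-k+1)$; $\Phi u=\{\phi_ju\}$ for $u\in\mathbb C^d$; $\mathcal T_{z,s}=\operatorname{Span}\{\Phi_{z,v}e_m: 1\le v\le s,1\le m\le d\}$ ($e_m$ standard basis). $A_s(z)$ is the $s\times s$ block matrix with $d\times d$ blocks $[A_s(z)]_{xv}=\binom{v-1}{x-1}A^{(v-x)}(z,z^{-1})$ for $x\le v$ and $0$ for $x>v$, $A^{(k)}$ the $k$-th $z$-derivative of $z\mapsto\sum_ra_rz^r$; it is the matrix of $\mathbf A|_{\mathcal T_{z,s}}$ in the basis $\{\Phi_{z,v}e_m\}$. *)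

(* Defs.v *)
From HB Require Import structures.
From mathcomp Require Import all_boot all_order all_algebra.
Set Implicit Arguments. Unset Strict Implicit. Unset Printing Implicit Defensive.
Import Order.TTheory GRing.Theory Num.Theory.
Local Open Scope ring_scope.

(* The bandwidth (p,q) is given by integers p <= q; the coefficients are
   a r for r = p + i, i = 0 .. bw p q, where bw p q = q - p. *)
Definition bw (p q : int) : nat := `|q - p|%N.

Definition ffz (C : numClosedFieldType) (j : int) (k : nat) : C :=
  \prod_(i < k) (j%:~R - i%:R).

Definition BBL (C : numClosedFieldType) (d : nat) (p q : int)
  (a : int -> 'M[C]_d) (Psi : int -> 'cV[C]_d) : int -> 'cV[C]_d :=
  fun j => \sum_(i < (bw p q).+1) a (p + i%:Z) *m Psi (j + (p + i%:Z)).

Definition inker (C : numClosedFieldType) (d : nat) (p q : int)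
  (a : int -> 'M[C]_d) (Psi : int -> 'cV[C]_d) : Prop :=
  forall j, BBL p q a Psi j = 0.

(* w^{-p} A(w,w^{-1}) as a matrix of polynomials, and its determinant *)
Definition shiftpoly (C : numClosedFieldType) (d : nat) (p q : int)
  (a : int -> 'M[C]_d) : 'M[{poly C}]_d :=
  \matrix_(i, k) \poly_(t < (bw p q).+1) (a (p + t%:Z) i k).

Definition detpoly (C : numClosedFieldType) (d : nat) (p q : int)
  (a : int -> 'M[C]_d) : {poly C} := \det (shiftpoly p q a).

Definition regular (C : numClosedFieldType) (d : nat) (p q : int)
  (a : int -> 'M[C]_d) : Prop := detpoly p q a != 0.

Definition Aeval (C : numClosedFieldType) (d : nat) (p q : int)
  (a : int -> 'M[C]_d) (z : C) : 'M[C]_d :=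
  \sum_(i < (bw p q).+1) (z ^ (p + i%:Z)) *: a (p + i%:Z).

(* k-th z-derivative of z |-> sum_r a_r z^r, i.e. sum_r r^(k) z^(r-k) a_r *)
Definition Ader (C : numClosedFieldType) (d : nat) (p q : int)
  (a : int -> 'M[C]_d) (k : nat) (z : C) : 'M[C]_d :=
  \sum_(i < (bw p q).+1)
     (ffz C (p + i%:Z) k * z ^ (p + i%:Z - k%:Z)) *: a (p + i%:Z).

Definition Phi (C : numClosedFieldType) (z : C) (v : nat) (j : int) : C :=
  ffz C j v.-1 * z ^ (j - (v.-1)%:Z).

Definition comb (C : numClosedFieldType) (d s : nat) (z : C)
  (u : 'I_s -> 'cV[C]_d) : int -> 'cV[C]_d :=
  fun j => \sum_(v < s) Phi z v.+1 j *: u v.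

(* Psi in T_{z,s} = Span{Phi_{z,v} e_m : 1<=v<=s, 1<=m<=d} *)
Definition inT (C : numClosedFieldType) (d : nat) (z : C) (s : nat)
  (Psi : int -> 'cV[C]_d) : Prop :=
  exists u : 'I_s -> 'cV[C]_d, forall j, Psi j = comb z u j.

(* the s x s block matrix A_s(z), blocks [A_s]_{xv} = C(v-1,x-1) A^{(v-x)}(z)
   for x <= v (here with 0-based block indices x, v < s) *)
Definition Ablk (C : numClosedFieldType) (d : nat) (p q : int)
  (a : int -> 'M[C]_d) (z : C) (s : nat)
  : 'M[C]_(\sum_(i < s) d, \sum_(i < s) d) :=
  \mxblock_(x < s, v < s)
     (if (x <= v)%N then 'C(v, x)%:R *: Ader p q a (v - x) z else 0 : 'M[C]_d).

(* dimension of the (right) kernel {u | M u = 0} of a square matrix *)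
Definition dimker (C : numClosedFieldType) (n : nat) (M : 'M[C]_n) : nat :=
  \rank (kermx M^T).

(* Main.v *)
Require Import Defs.
From HB Require Import structures.
From mathcomp Require Import all_boot all_order all_algebra.
From Stdlib Require Import FunctionalExtensionality.
From mathcomp Require Import ring zify.
Set Implicit Arguments. Unset Strict Implicit. Unset Printing Implicit Defensive.
Import Order.TTheory GRing.Theory Num.Theory.
Local Open Scope ring_scope.

Section Act.
Variable C : numClosedFieldType.
Implicit Types (f g : {poly C}).
Variable V : lmodType C.

Definition act (V : lmodType C) f (x : int -> V) : int -> V :=
  fun j => \sum_(t < size f) f`_t *: x (j + t%:Z).

Lemma act_bound f (x : int -> V) n j : (size f <= n)%N ->
  act f x j = \sum_(t < n) f`_t *: x (j + t%:Z).
Proof.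
move=> Hn; rewrite /act (big_ord_widen n (fun t => f`_t *: x (j + t%:Z))) //.
rewrite big_mkcond; apply: eq_bigr => t _; case: ifP => // /negbT.
by rewrite -leqNgt => H; rewrite nth_default // scale0r.
Qed.

Lemma actD f g (x : int -> V) j : act (f + g) x j = act f x j + act g x j.
Proof.
rewrite (@act_bound (f + g) x (maxn (size f) (size g))) ?size_polyD //.
rewrite (@act_bound f x (maxn (size f) (size g))) ?leq_maxl //.
rewrite (@act_bound g x (maxn (size f) (size g))) ?leq_maxr //.
by rewrite -big_split; apply: eq_bigr => t _; rewrite coefD scalerDl.
Qed.

Lemma act0p (x : int -> V) j : act 0 x j = 0.
Proof. by rewrite /act size_poly0 big_ord0. Qed.

Lemma actC c (x : int -> V) j : act c%:P x j = c *: x j.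
Proof.
rewrite (@act_bound c%:P x 1) ?size_polyC ?leq_b1 //.
by rewrite big_ord1 coefC /= addr0.
Qed.

Lemma actCM c f (x : int -> V) j : act (c%:P * f) x j = c *: act f x j.
Proof.
rewrite (@act_bound _ x (size f)); last by rewrite mul_polyC size_scale_leq.
rewrite /act scaler_sumr; apply: eq_bigr => t _; by rewrite coefCM scalerA.
Qed.

Lemma actMX f (x : int -> V) j : act (f * 'X) x j = act f x (j + 1).
Proof.
rewrite (@act_bound _ x (size f).+1); last first.
  by rewrite (leq_trans (size_polyMleq _ _)) // size_polyX addn2.
rewrite big_ord_recl coefMX /= scale0r add0r /act; apply: eq_bigr => t _.
by rewrite coefMX /= -addrA; congr (_ *: x (j + _)); rewrite -add1n PoszD addrC.
Qed.

Lemma act_add f (x y : int -> V) j :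
  act f (fun j => x j + y j) j = act f x j + act f y j.
Proof. by rewrite /act -big_split; apply: eq_bigr => t _; rewrite scalerDr. Qed.

Lemma act_scale f c (x : int -> V) j :
  act f (fun j => c *: x j) j = c *: act f x j.
Proof. by rewrite /act scaler_sumr; apply: eq_bigr => t _; rewrite !scalerA mulrC. Qed.

Lemma act_sum f (I : finType) (x : I -> int -> V) j :
  act f (fun j => \sum_i x i j) j = \sum_i act f (x i) j.
Proof.
rewrite /act exchange_big; apply: eq_bigr => t _; by rewrite scaler_sumr.
Qed.

Lemma act_zero f j : act f (fun _ => (0 : V)) j = 0.
Proof. by rewrite /act big1 // => t _; rewrite scaler0. Qed.

Lemma act_mul f g (x : int -> V) : act (f * g) x = act f (act g x).
Proof.
elim/poly_ind: f g x => [|f c IH] g x; apply: functional_extensionality => j.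
  by rewrite mul0r !act0p.
rewrite mulrDl mulrAC actD actMX IH actCM actD actMX actC.
by [].
Qed.

Lemma act1 (x : int -> V) : act 1 x = x.
Proof. by apply: functional_extensionality => j; rewrite actC scale1r. Qed.

Lemma actXn k (x : int -> V) j : act ('X^k) x j = x (j + k%:Z).
Proof.
elim: k j => [|k IH] j; first by rewrite expr0 act1 addr0.
by rewrite exprSr actMX IH -addn1 PoszD addrA addrAC.
Qed.

End Act.

Section ActM.
Variable C : numClosedFieldType.
Variable d : nat.
Implicit Types (f g : {poly C}) (M N : 'M[{poly C}]_d) (x y : int -> 'cV[C]_d).

Lemma act_sumf (V : lmodType C) (I : finType) (F : I -> {poly C}) (x : int -> V) j :
  act (\sum_i F i) x j = \sum_i act (F i) x j.
Proof. exact: (big_morph (fun g => act g x j) (fun g h => actD g h x j) (act0p x j)). Qed.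

Definition cmpt x (k : 'I_d) : int -> C^o := fun j => x j k 0.

Definition actM M x : int -> 'cV[C]_d :=
  fun j => \col_i \sum_k act (M i k) (cmpt x k) j.

Lemma act_entry f x j i : (act f x j) i 0 = act f (cmpt x i) j.
Proof. by rewrite /act summxE; apply: eq_bigr => t _; rewrite mxE. Qed.

Lemma actM_mul M N x : actM (M *m N) x = actM M (actM N x).
Proof.
apply: functional_extensionality => j; apply/matrixP => i o.
rewrite !mxE; under eq_bigr do rewrite mxE act_sumf.
rewrite exchange_big; apply: eq_bigr => l _.
have -> : cmpt (actM N x) l = fun j' => \sum_k act (N l k) (cmpt x k) j'.
  by apply: functional_extensionality => j'; rewrite /cmpt /actM mxE.
rewrite act_sum; apply: eq_bigr => k _; by rewrite act_mul.
Qed.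

Lemma actM_scalar f x : actM f%:M x = act f x.
Proof.
apply: functional_extensionality => j; apply/matrixP => i o.
rewrite [o]ord1 act_entry !mxE (bigD1 i) //= big1 ?addr0; first by rewrite mxE eqxx mulr1n.
by move=> k /negbTE Hk; rewrite mxE eq_sym Hk mulr0n act0p.
Qed.

Lemma actM1 x : actM 1%:M x = x.
Proof.
rewrite actM_scalar; exact: act1.
Qed.

Lemma actM_add M x y j : actM M (fun j => x j + y j) j = actM M x j + actM M y j.
Proof.
apply/matrixP => i o; rewrite !mxE -big_split; apply: eq_bigr => k _.
have -> : cmpt (fun j => x j + y j) k = fun j => cmpt x k j + cmpt y k j.
  by apply: functional_extensionality => j'; rewrite /cmpt mxE.
by rewrite act_add.
Qed.

Lemma actM_scale M c x j : actM M (fun j => c *: x j) j = c *: actM M x j.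
Proof.
apply/matrixP => i o; rewrite !mxE mulr_sumr; apply: eq_bigr => k _.
have -> : cmpt (fun j => c *: x j) k = fun j => c *: cmpt x k j.
  by apply: functional_extensionality => j'; rewrite /cmpt mxE.
by rewrite act_scale.
Qed.

Lemma actM_sum M (I : finType) (x : I -> int -> 'cV[C]_d) j :
  actM M (fun j => \sum_i x i j) j = \sum_i actM M (x i) j.
Proof.
apply/matrixP => r o; rewrite !mxE summxE; under [RHS]eq_bigr do rewrite mxE.
rewrite exchange_big; apply: eq_bigr => k _.
have -> : cmpt (fun j => \sum_i x i j) k = fun j => \sum_i cmpt (x i) k j.
  by apply: functional_extensionality => j'; rewrite /cmpt summxE.
by rewrite act_sum.
Qed.

Lemma actM_zero M j : actM M (fun _ => 0) j = 0.
Proof.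
apply/matrixP => r o; rewrite !mxE big1 // => k _.
have -> : cmpt (fun _ => 0) k = fun _ => 0 by apply: functional_extensionality => j'; rewrite /cmpt mxE.
exact: act_zero.
Qed.

Lemma actM_act M f x : actM M (act f x) = act f (actM M x).
Proof.
rewrite -[act f x]actM_scalar -[act f (actM M x)]actM_scalar -!actM_mul.
by rewrite scalar_mxC.
Qed.

Lemma BBL_actM M p q (a : int -> 'M[C]_d) x j :
  (forall i k, size (M i k) <= (bw p q).+1)%N ->
  (forall i k (t : nat), (t < (bw p q).+1)%N -> (M i k)`_t = a (p + t%:Z) i k) ->
  BBL p q a x j = actM M x (j + p).
Proof.
move=> Hs Hc; apply/matrixP => i o; rewrite /BBL /actM summxE mxE.
under eq_bigr do rewrite mxE.
under [RHS]eq_bigr do rewrite (act_bound _ _ (Hs _ _)).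
rewrite exchange_big; apply: eq_bigr => t _; apply: eq_bigr => k _.
by rewrite Hc // /cmpt addrA [o]ord1.
Qed.

End ActM.

Section PhiFacts.
Variable C : numClosedFieldType.

Lemma ffz0 (j : int) : ffz C j 0 = 1.
Proof. by rewrite /ffz big_ord0. Qed.

Lemma ffzS (j : int) k : ffz C j k.+1 = ffz C j k * (j%:~R - k%:R).
Proof. by rewrite /ffz big_ord_recr. Qed.

Lemma ffzS1 (j : int) k : ffz C (j + 1) k.+1 = (j%:~R + 1) * ffz C j k.
Proof.
rewrite /ffz big_ord_recl /= subr0 rmorphD /=; congr (_ * _).
apply: eq_bigr => i _; rewrite /bump /= add1n -natr1 rmorph1; ring.
Qed.

Lemma ffz_diff (j : int) k :
  ffz C (j + 1) k.+1 - ffz C j k.+1 = k.+1%:R * ffz C j k.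
Proof.
rewrite ffzS1 ffzS mulrC -mulrBr mulrC; congr (_ * _).
rewrite -natr1; ring.
Qed.

Variable z : C.
Hypothesis Hz : z != 0.

Lemma Phi1E (j : int) : Phi z 1 j = z ^ j.
Proof. by rewrite /Phi /= ffz0 mul1r subr0. Qed.

Lemma Phi_step v (j : int) :
  Phi z v.+2 (j + 1) - z * Phi z v.+2 j = v.+1%:R * Phi z v.+1 j.
Proof.
rewrite /Phi /= mulrCA -{2}(expr1z z) -expfzDr //.
have -> : j + 1 - v.+1%:Z = j - v%:Z by rewrite -addn1 PoszD; ring.
have -> : 1 + (j - v.+1%:Z) = j - v%:Z by rewrite -addn1 PoszD; ring.
by rewrite -mulrBl ffz_diff mulrA.
Qed.

Lemma Phi1_step (j : int) : Phi z 1 (j + 1) - z * Phi z 1 j = 0.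
Proof.
by rewrite !Phi1E -{2}(expr1z z) -expfzDr // [1 + j]addrC subrr.
Qed.

Variable V : lmodType C.

Lemma act_XsubC (y : int -> V) j : act ('X - z%:P) y j = y (j + 1) - z *: y j.
Proof.
rewrite -polyCN actD actC scaleNr; congr (_ - _).
by rewrite -['X]mul1r actMX act1.
Qed.

Lemma act_sub f (x y : int -> V) j :
  act f (fun j => x j - y j) j = act f x j - act f y j.
Proof.
have -> : (fun j => x j - y j) = (fun j => x j + (-1) *: y j).
  by apply: functional_extensionality => i; rewrite scaleN1r.
by rewrite act_add act_scale scaleN1r.
Qed.

Lemma geomP (e : int -> V) : (forall j, e (j + 1) = z *: e j) ->
  forall j, e j = z ^ j *: e 0.
Proof.
move=> He.
have Hn : forall (n : nat) j, e (j + n%:Z) = z ^+ n *: e j.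
  elim=> [|n IH] j; first by rewrite addr0 expr0 scale1r.
  by rewrite -addn1 PoszD addrA He IH scalerA exprD expr1 mulrC.
case=> n.
  by rewrite -exprnP -Hn add0r.
have := Hn n.+1 (Negz n); rewrite NegzE addNr => ->.
by rewrite scalerA exprnP -expfzDr // addNr expr0z scale1r.
Qed.

End PhiFacts.

Section Comb.
Variable C : numClosedFieldType.
Variable d : nat.
Variable z : C.
Hypothesis Hz : z != 0.

Lemma comb0 (u : 'I_0 -> 'cV[C]_d) : comb z u = fun _ => 0.
Proof. by rewrite /comb; apply: functional_extensionality => j; rewrite big_ord0. Qed.

Lemma comb_ext s (u w : 'I_s -> 'cV[C]_d) : (forall v, u v = w v) -> comb z u = comb z w.
Proof. by move=> H; rewrite (functional_extensionality _ _ H). Qed.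

Lemma act_XsubC_comb s (u : 'I_s.+1 -> 'cV[C]_d) :
  act ('X - z%:P) (comb z u) = comb z (fun v : 'I_s => v.+1%:R *: u (lift ord0 v)).
Proof.
rewrite {2}/comb; apply: functional_extensionality => j; rewrite act_XsubC /comb.
rewrite scaler_sumr -sumrB big_ord_recl scalerA -scalerBl Phi1_step // scale0r add0r.
apply: eq_bigr => v _; rewrite [RHS]scalerA [z *: _]scalerA -scalerBl; congr (_ *: _).
by rewrite lift0 Phi_step // mulrC.
Qed.

Lemma comb_killed s (u : 'I_s -> 'cV[C]_d) :
  act (('X - z%:P) ^+ s) (comb z u) = fun _ => 0.
Proof.
elim: s u => [|s IH] u.
  by rewrite expr0 act1 comb0.
by rewrite exprSr act_mul act_XsubC_comb IH.
Qed.

Lemma comb_inj s (u : 'I_s -> 'cV[C]_d) :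
  comb z u = (fun _ => 0) -> forall v, u v = 0.
Proof.
elim: s u => [|s IH] u Hu v; first by case: v.
have H1 : forall v : 'I_s, u (lift ord0 v) = 0.
  move=> v'; have := IH _ (etrans (esym (act_XsubC_comb u)) _) v'.
  rewrite Hu; move/(_ (functional_extensionality _ _ (fun j => act_zero _ _ j))).
  by move/eqP; rewrite scaler_eq0 pnatr_eq0 /= => /eqP.
have H0 : u ord0 = 0.
  have := congr1 (fun f => f 0) Hu; rewrite /comb big_ord_recl /= big1.
    by rewrite Phi1E expr0z scale1r addr0.
  by move=> i _; rewrite H1 scaler0.
by case: (unliftP ord0 v) => [v'|] ->.
Qed.

Lemma comb_lift s (y : 'I_s -> 'cV[C]_d) :
  exists w : 'I_s.+1 -> 'cV[C]_d, act ('X - z%:P) (comb z w) = comb z y.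
Proof.
exists (fun v => if unlift ord0 v is Some v' then (v'.+1%:R)^-1 *: y v' else 0).
rewrite act_XsubC_comb; apply: comb_ext => v; rewrite liftK scalerA mulfV ?scale1r //.
by rewrite pnatr_eq0.
Qed.

Lemma ker_inT s (x : int -> 'cV[C]_d) :
  act (('X - z%:P) ^+ s) x = (fun _ => 0) -> exists u : 'I_s -> 'cV[C]_d, x = comb z u.
Proof.
elim: s x => [|s IH] x Hx.
  by exists (fun _ => 0); rewrite comb0 -Hx expr0 act1.
have [u Hu] : exists u : 'I_s -> 'cV[C]_d, act ('X - z%:P) x = comb z u.
  by apply: IH; rewrite -act_mul -exprSr.
have [w Hw] := comb_lift u.
set e := fun j => x j - comb z w j.
have He : forall j, e (j + 1) = z *: e j.
  move=> j; apply/eqP; rewrite -subr_eq0; apply/eqP.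
  have := act_sub ('X - z%:P) x (comb z w) j.
  rewrite Hu -Hw subrr act_XsubC => <-; by [].
exists (fun v => w v + (if v == ord0 then e 0 else 0)).
apply: functional_extensionality => j.
rewrite /comb; under eq_bigr do rewrite scalerDr.
rewrite big_split /= [X in _ + X](bigD1 ord0) //= ?eqxx [X in _ + (_ + X)]big1 ?addr0; last first.
  by move=> i /negbTE ->; rewrite scaler0.
rewrite Phi1E -geomP // /e -/(comb z w j); by rewrite addrC subrK.
Qed.

End Comb.

Section Vander.
Variable R : comNzRingType.
Definition ffv (x : R) (n : nat) : R := \prod_(i < n) (x - i%:R).

Lemma bump0S (k : nat) : bump 0 k = k.+1. Proof. by []. Qed.

Lemma ffvS x n : ffv x n.+1 = ffv x n * (x - n%:R).
Proof. by rewrite /ffv big_ord_recr. Qed.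

Lemma ffvD x y n :
  ffv (x + y) n = \sum_(k < n.+1) 'C(n, k)%:R * ffv x (n - k) * ffv y k.
Proof.
elim: n => [|n IH].
  by rewrite big_ord1 subnn bin0 /ffv !big_ord0 !mulr1.
have E1 : forall k : 'I_n.+1, 'C(n, k)%:R * ffv x (n - k) * ffv y k * (x + y - n%:R)
   = 'C(n, k)%:R * ffv x (n - k).+1 * ffv y k + 'C(n, k)%:R * ffv x (n - k) * ffv y k.+1.
  move=> k; rewrite !ffvS.
  have Hk : (k <= n)%N by rewrite -ltnS.
  rewrite natrB //; ring.
rewrite ffvS IH mulr_suml; under eq_bigr do rewrite E1.
rewrite big_split /= [in RHS]big_ord_recl /= subn0 bin0 mul1r.
rewrite [X in X + _ = _]big_ord_recl /= subn0 bin0 mul1r -addrA; congr (_ + _).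
rewrite [RHS](eq_bigr (fun i : 'I_n.+1 => 'C(n, i.+1)%:R * ffv x (n - i) * ffv y i.+1
      + 'C(n, i)%:R * ffv x (n - i) * ffv y i.+1)); last first.
  by move=> i _; rewrite bump0S binS natrD subSS; ring.
rewrite big_split /=; congr (_ + _).
rewrite big_ord_recr /= bin_small // mul0r mul0r addr0.
apply: eq_bigr => i _; rewrite bump0S; congr (_ * ffv x _ * _).
by rewrite subnSK.
Qed.
End Vander.

Section CombShift.
Variable C : numClosedFieldType.
Variable d : nat.
Variable z : C.
Hypothesis Hz : z != 0.

Definition Fz (r : int) (k : nat) : C := ffz C r k * z ^ (r - k%:Z).

Lemma PhiD v (j r : int) : Phi z v.+1 (j + r) =
  \sum_(k < v.+1) 'C(v, k)%:R * Phi z (v - k).+1 j * Fz r k.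
Proof.
rewrite /Phi /=.
have -> : ffz C (j + r) v = ffv (j%:~R + r%:~R) v by rewrite /ffz rmorphD.
rewrite ffvD mulr_suml; apply: eq_bigr => k _.
have Hk : (k <= v)%N by rewrite -ltnS.
have -> : j + r - v%:Z = (j - (v - k)%N%:Z) + (r - k%:Z).
  by rewrite -subzn //; ring.
rewrite expfzDr // /Fz /ffz /ffv; ring.
Qed.

Lemma comb_shift N (u : 'I_N -> 'cV[C]_d) (r j : int) :
  comb z u (j + r) = \sum_(x < N) Phi z x.+1 j *:
     \sum_(v < N) (if (x <= v)%N then ('C(v, x)%:R * Fz r (v - x)) *: u v else 0).
Proof.
rewrite /comb; under [RHS]eq_bigr do rewrite scaler_sumr.
rewrite exchange_big; apply: eq_bigr => v _.
rewrite PhiD scaler_suml.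
rewrite (eq_bigr (fun x : 'I_N => if (x <= v)%N then
   (Phi z x.+1 j * ('C(v, x)%:R * Fz r (v - x))) *: u v else 0)); last first.
  by move=> x _; case: ifP => _; rewrite ?scaler0 // scalerA.
rewrite -big_mkcond /=.
have Hv : (v.+1 <= N)%N by [].
rewrite -(big_ord_widen N (fun x : nat => (Phi z x.+1 j * ('C(v, x)%:R * Fz r (v - x))) *: u v) Hv).
rewrite (reindex_inj rev_ord_inj) /=; apply: eq_bigr => k _.
have Hk : (k <= v)%N by rewrite -ltnS.
rewrite subSS subKn // bin_sub //; congr (_ *: _); ring.
Qed.

Lemma BBL_comb p q (a : int -> 'M[C]_d) N (u : 'I_N -> 'cV[C]_d) :
  BBL p q a (comb z u) = comb z (fun x : 'I_N =>
    \sum_(v < N) (if (x <= v)%N then 'C(v, x)%:R *: Ader p q a (v - x) z else 0) *m u v).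
Proof.
apply: functional_extensionality => j.
rewrite /BBL {2}/comb.
under eq_bigr do rewrite comb_shift mulmx_sumr.
rewrite exchange_big; apply: eq_bigr => x _.
under eq_bigr do rewrite -scalemxAr.
rewrite -scaler_sumr; congr (_ *: _).
under eq_bigr do rewrite mulmx_sumr.
rewrite exchange_big; apply: eq_bigr => v _.
case: ifP => _; last by rewrite mul0mx big1 // => i _; rewrite mulmx0.
rewrite /Ader scaler_sumr mulmx_suml; apply: eq_bigr => i _.
by rewrite -scalemxAr scalemxAl scalerA.
Qed.
End CombShift.

Section Coord.
Variable C : numClosedFieldType.
Variable d : nat.
Variable z : C.
Hypothesis Hz : z != 0.
Variable N : nat.
Local Notation m := (\sum_(i < N) d)%N.

Definition combc (c : 'cV[C]_m) : int -> 'cV[C]_d :=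
  comb z (fun v : 'I_N => @submxcol _ N (fun _ => d) 1 c v).

Lemma combcE (u : 'I_N -> 'cV[C]_d) : combc (\mxcol_v u v) = comb z u.
Proof. by apply: comb_ext => v; rewrite mxcolK. Qed.

Lemma combcB (c1 c2 : 'cV[C]_m) j : combc (c1 - c2) j = combc c1 j - combc c2 j.
Proof.
rewrite /combc /comb -sumrB; apply: eq_bigr => v _.
by rewrite submxcolB scalerBr.
Qed.

Lemma combcZ (k : C) (c : 'cV[C]_m) j : combc (k *: c) j = k *: combc c j.
Proof.
rewrite /combc /comb scaler_sumr; apply: eq_bigr => v _.
have -> : @submxcol _ N (fun _ => d) 1 (k *: c) v = k *: submxcol c v.
  by apply/matrixP => i o; rewrite !mxE.
by rewrite !scalerA mulrC.
Qed.

Lemma combc_inj (c : 'cV[C]_m) : combc c = (fun _ => 0) -> c = 0.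
Proof.
move=> H; have := comb_inj Hz H => Hv.
by rewrite -(submxcolK c) (eq_mxcol Hv) mxcol0.
Qed.

Lemma combc_injP (c1 c2 : 'cV[C]_m) : combc c1 = combc c2 -> c1 = c2.
Proof.
move=> H; apply/eqP; rewrite -subr_eq0; apply/eqP; apply: combc_inj.
by apply: functional_extensionality => j; rewrite combcB H subrr.
Qed.

Lemma Ablk_mul p q (a : int -> 'M[C]_d) (c : 'cV[C]_m) (x : 'I_N) :
  @submxcol _ N (fun _ => d) 1 (Ablk p q a z N *m c) x =
  \sum_(v < N) (if (x <= v)%N then 'C(v, x)%:R *: Ader p q a (v - x) z else 0)
     *m @submxcol _ N (fun _ => d) 1 c v.
Proof.
by rewrite -{1}(submxcolK c) /Ablk mul_mxblock_mxrow mxcolK.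
Qed.

Lemma BBL_combc p q (a : int -> 'M[C]_d) (c : 'cV[C]_m) :
  BBL p q a (combc c) = combc (Ablk p q a z N *m c).
Proof.
rewrite /combc BBL_comb //; apply: comb_ext => x; by rewrite Ablk_mul.
Qed.

Definition msize (M : 'M[{poly C}]_d) : nat :=
  \max_(ik : 'I_d * 'I_d) size (M ik.1 ik.2).
Definition coefm (M : 'M[{poly C}]_d) (r : int) : 'M[C]_d :=
  \matrix_(i, k) (M i k)`_(`|r|%N).
Definition Mat (M : 'M[{poly C}]_d) : 'M[C]_m :=
  Ablk 0 (msize M)%:Z (coefm M) z N.

Lemma actM_combc (M : 'M[{poly C}]_d) (c : 'cV[C]_m) :
  actM M (combc c) = combc (Mat M *m c).
Proof.
rewrite /Mat -BBL_combc; apply: functional_extensionality => j.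
rewrite (@BBL_actM _ _ M) ?addr0 //.
  move=> i k; rewrite /bw subr0 absz_nat.
  apply: leq_trans (leqnSn _).
  exact: (@leq_bigmax _ (fun ik : 'I_d * 'I_d => size (M ik.1 ik.2)) (i, k)).
by move=> i k t _; rewrite /coefm mxE add0r absz_nat.
Qed.

Lemma Mat_eq (A B : 'M[C]_m) : (forall c, combc (A *m c) = combc (B *m c)) -> A = B.
Proof.
move=> H; apply/matrixP => i j; have := H (delta_mx j 0).
by rewrite -!colE => /combc_injP /matrixP /(_ i 0); rewrite !mxE.
Qed.

Lemma Mat_mul (M1 M2 : 'M[{poly C}]_d) : Mat (M1 *m M2) = Mat M1 *m Mat M2.
Proof.
by apply: Mat_eq => c; rewrite -actM_combc actM_mul !actM_combc mulmxA.
Qed.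

Lemma Mat1 : Mat 1%:M = 1%:M.
Proof. by apply: Mat_eq => c; rewrite -actM_combc actM1 mul1mx. Qed.

End Coord.

Section Helpers.
Variable C : numClosedFieldType.

Lemma KROW n (A : 'M[C]_n) (r : 'rV_n) : (r <= kermx A^T)%MS -> A *m r^T = 0.
Proof. by move/sub_kermxP => H; rewrite -[A]trmxK -trmx_mul H trmx0. Qed.

Lemma KROW' n (A : 'M[C]_n) (r : 'rV_n) : A *m r^T = 0 -> (r <= kermx A^T)%MS.
Proof. by move=> H; apply/sub_kermxP; rewrite -[r]trmxK -trmx_mul H trmx0. Qed.

Lemma dimkerE n (A : 'M[C]_n) : dimker A = (n - \rank A)%N.
Proof. by rewrite /dimker mxrank_ker mxrank_tr. Qed.

Lemma kermx_sub n (A B : 'M[C]_n) : (forall c : 'cV_n, A *m c = 0 -> B *m c = 0) ->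
  (kermx A^T <= kermx B^T)%MS.
Proof.
move=> H; apply/row_subP => i; apply: KROW'; apply: H; apply: KROW; exact: (row_sub i (kermx A^T)).
Qed.

Lemma dimker_eq n (A B : 'M[C]_n) : (forall c : 'cV_n, A *m c = 0 <-> B *m c = 0) ->
  dimker A = dimker B.
Proof.
move=> H; apply/eqP; rewrite eqn_leq /dimker !mxrankS //; apply: kermx_sub => c; by case: (H c).
Qed.

Lemma dimker_mulU n (A U : 'M[C]_n) : U \in unitmx -> dimker (A *m U) = dimker A.
Proof. by move=> HU; rewrite !dimkerE mxrankMfree // row_free_unit. Qed.

Lemma dimker0 n (A : 'M[C]_n) : (forall c : 'cV_n, A *m c = 0 -> c = 0) -> dimker A = 0%N.
Proof.
move=> H; apply/eqP; rewrite /dimker mxrank_eq0; apply/eqP/row_matrixP => i.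
rewrite row0; have := H _ (KROW (row_sub i (kermx A^T))).
by move/(congr1 trmx); rewrite trmxK trmx0.
Qed.

Lemma act_coprime (V : lmodType C) f g (x : int -> V) : coprimep f g ->
  act f x = (fun _ => 0) -> act g x = (fun _ => 0) -> x = (fun _ => 0).
Proof.
move=> /Bezout_eq1_coprimepP [[u1 u2] /= Hu] Hf Hg.
apply: functional_extensionality => j.
by rewrite -[x]act1 -Hu actD !act_mul Hf Hg !act_zero addr0.
Qed.

Variable d : nat.

Lemma actM_det (M : 'M[{poly C}]_d) x : actM M x = (fun _ => 0) ->
  act (\det M) x = (fun _ => 0).
Proof.
move=> H; rewrite -actM_scalar -mul_adj_mx actM_mul H.
by apply: functional_extensionality => j; rewrite actM_zero.
Qed.

Variable z : C.
Hypothesis Hz : z != 0.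

Lemma KER (M : 'M[{poly C}]_d) k h N x :
  \det M = ('X - z%:P) ^+ k * h -> ~~ root h z ->
  actM M x = (fun _ => 0) -> act (('X - z%:P) ^+ N) x = (fun _ => 0) ->
  act (('X - z%:P) ^+ k) x = (fun _ => 0).
Proof.
move=> Hd Hh HM HN; apply: (@act_coprime _ h (('X - z%:P) ^+ N)).
- by rewrite coprimep_expr // coprimep_XsubC.
- by rewrite -act_mul mulrC -Hd actM_det.
- by rewrite -act_mul -exprD addnC exprD act_mul HN; apply: functional_extensionality => j; rewrite act_zero.
Qed.

Definition pad k N (u : 'I_k -> 'cV[C]_d) : 'I_N -> 'cV[C]_d :=
  fun v => oapp u 0 (insub (val v)).

Lemma comb_pad k N (u : 'I_k -> 'cV[C]_d) : (k <= N)%N -> comb z (@pad k N u) = comb z u.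
Proof.
move=> HkN; apply: functional_extensionality => j; rewrite /comb /pad.
pose F := fun n : nat => Phi z n.+1 j *: oapp u 0 (insub n).
rewrite -[LHS]/(\sum_(v < N) F v) (bigID (fun v : 'I_N => (v < k)%N)) /=.
rewrite [X in _ + X]big1 ?addr0; last first.
  by move=> v /negbTE Hv; rewrite /F insubF // scaler0.
rewrite -big_ord_widen //; apply: eq_bigr => v _; by rewrite /F valK.
Qed.

End Helpers.

Section Local.
Variable C : numClosedFieldType.
Variable d : nat.
Variable z : C.
Hypothesis Hz : z != 0.

Lemma combc0 N : combc z (0 : 'cV[C]_(\sum_(i < N) d)) = fun _ => 0.
Proof.
by apply: functional_extensionality => j; rewrite /combc /comb big1 // => v _; rewrite submxcol0 scaler0.
Qed.

Definition Dg (i0 : 'I_d) : 'M[{poly C}]_d :=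
  diag_mx (\row_(kk < d) (if kk == i0 then 'X - z%:P else 1)).

Lemma actM_Dg i0 (x : int -> 'cV[C]_d) j i :
  (actM (Dg i0) x j) i 0 = if i == i0 then act ('X - z%:P) (cmpt x i) j else x j i 0.
Proof.
rewrite /actM mxE (bigD1 i) //= big1 ?addr0; last first.
  by move=> k /negbTE Hk; rewrite /Dg mxE eq_sym Hk mulr0n act0p.
rewrite /Dg mxE eqxx mulr1n mxE; case: ifP => // _.
by rewrite act1.
Qed.

Lemma Dg_pre i0 N k (u : 'I_k -> 'cV[C]_d) : (k < N)%N ->
  exists c : 'cV[C]_(\sum_(i < N) d), actM (Dg i0) (combc z c) = comb z u.
Proof.
move=> HkN.
have [w Hw] := comb_lift Hz u.
exists (\mxcol_(v < N) \col_(i < d)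
   (if i == i0 then pad (N:=N) w v i 0 else pad (N:=N) u v i 0)).
rewrite combcE.
have Hc : forall i', cmpt (comb z (fun v : 'I_N => \col_(i < d)
     (if i == i0 then pad (N:=N) w v i 0 else pad (N:=N) u v i 0))) i'
   = if i' == i0 then cmpt (comb z w) i' else cmpt (comb z u) i'.
  move=> i'; case: ifP => Hi; apply: functional_extensionality => j';
  rewrite /cmpt ?(comb_pad z w HkN) -?(comb_pad z u (ltnW HkN)) -?(comb_pad z w HkN) /comb !summxE;
  apply: eq_bigr => v _; by rewrite !mxE Hi.
apply: functional_extensionality => j; apply/matrixP => i o; rewrite [o]ord1 actM_Dg.
case: ifP => Hi.
  by rewrite Hc Hi -act_entry Hw.
by have := congr1 (fun f => f j) (Hc i); rewrite Hi /cmpt => ->.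
Qed.


Lemma Dg_dimker i0 N : (0 < N)%N -> dimker (Mat z N (Dg i0)) = 1%N.
Proof.
move=> HN.
pose o0 : 'I_N := Ordinal HN.
pose e0 : 'cV[C]_(\sum_(i < N) d) :=
  \mxcol_(v < N) (if v == o0 then delta_mx i0 0 else 0).
have He0 : combc z e0 = fun j => Phi z 1 j *: delta_mx i0 0.
  rewrite combcE; apply: functional_extensionality => j.
  rewrite /comb (bigD1 o0) //= big1 ?addr0 //.
  by move=> v /negbTE ->; rewrite scaler0.
have Hker : forall c, Mat z N (Dg i0) *m c = 0 <-> exists a : C, c = a *: e0.
  move=> c; split.
  - move=> Hc; set psi := combc z c.
    have Hpsi : actM (Dg i0) psi = fun _ => 0.
      by rewrite /psi actM_combc // Hc combc0.
    have Hg : forall j, psi j i0 0 = z ^ j * psi 0 i0 0.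
      move=> j; have := @geomP C z Hz C^o (cmpt psi i0) _ j; apply.
      move=> j'; have := congr1 (fun f : int -> 'cV[C]_d => f j' i0 0) Hpsi; rewrite actM_Dg eqxx mxE.
      by rewrite act_XsubC => /eqP; rewrite subr_eq0 => /eqP.
    exists (psi 0 i0 0); apply: (combc_injP Hz); apply: functional_extensionality => j.
    rewrite combcZ He0; apply/matrixP => i o; rewrite [o]ord1 !mxE Phi1E.
    have := congr1 (fun f : int -> 'cV[C]_d => f j i 0) Hpsi; rewrite actM_Dg mxE.
    case: (eqVneq i i0) => [->|Hi] /=.
      by move=> _; rewrite -/psi Hg mulr1 mulrC.
    by move=> H; rewrite -/psi H !mulr0.
  - move=> [a ->]; apply: (combc_inj Hz); rewrite -actM_combc //.
    apply: functional_extensionality => j; apply/matrixP => i o.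
    rewrite [o]ord1 actM_Dg mxE; case: (eqVneq i i0) => [->|Hi].
      have -> : cmpt (combc z (a *: e0)) i0 = fun j => a * z ^ j.
        apply: functional_extensionality => j'.
        by rewrite /cmpt combcZ He0 !mxE Phi1E !eqxx /= mulr1.
      rewrite act_XsubC /= addrC expfzDr // expr1z.
      have -> : z *: (a * z ^ j : C^o) = z * (a * z ^ j) :> C by []. 
      ring.
    by rewrite combcZ He0 !mxE (negbTE Hi) /= !mulr0.
have He0nz : e0 != 0.
  apply/negP => /eqP H0; have := congr1 (fun f : int -> 'cV[C]_d => f 0 i0 0) He0.
  rewrite H0 combc0 !mxE Phi1E expr0z !eqxx /= mul1r => /esym/eqP.
  by rewrite oner_eq0.
have S1 : (kermx (Mat z N (Dg i0))^T <= e0^T)%MS.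
  apply/row_subP => i; have := KROW (row_sub i (kermx (Mat z N (Dg i0))^T)).
  move/Hker => [a Ha]; rewrite -[row _ _]trmxK Ha linearZ /=.
  exact: scalemx_sub (submx_refl _).
have S2 : (e0^T <= kermx (Mat z N (Dg i0))^T)%MS.
  apply: KROW'; rewrite trmxK; apply/Hker; exists 1; by rewrite scale1r.
have Hr : \rank e0^T = 1%N by rewrite rank_rV trmx_eq0 He0nz.
apply/eqP; rewrite /dimker eqn_leq; apply/andP; split.
  by rewrite -Hr; exact: mxrankS.
by rewrite -{1}Hr; exact: mxrankS.
Qed.

End Local.

Lemma arith_aux (mm rb ra k : nat) : (rb <= mm)%N -> (mm - rb)%N = 1%N ->
  (ra + k)%N = rb -> (k <= rb)%N -> (mm - ra)%N = k.+1.
Proof. lia. Qed.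

Section LocalThm.
Variable C : numClosedFieldType.
Variable d : nat.
Variable z : C.
Hypothesis Hz : z != 0.
Variable N : nat.

Theorem local_dim : forall k (M : 'M[{poly C}]_d) h,
  \det M = ('X - z%:P) ^+ k * h -> ~~ root h z -> (k <= N)%N ->
  dimker (Mat z N M) = k.
Proof.
elim=> [|k IH] M h Hd Hh HkN.
  apply: dimker0 => c Hc; apply: (combc_inj Hz).
  have H1 : actM M (combc z c) = fun _ => 0 by rewrite actM_combc // Hc combc0.
  have := KER Hd Hh H1 (comb_killed Hz _).
  by rewrite expr0 act1.
pose Mz := map_mx (horner_eval z) M.
have Hdz : \det Mz = 0.
  rewrite /Mz det_map_mx; change ((\det M).[z] = 0).
  rewrite Hd hornerM horner_exp hornerXsubC subrr.
  by rewrite exprS !mul0r.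
have [v Hv0 Hv] : exists2 v : 'rV_d, v != 0 & v *m Mz^T = 0.
  by apply/det0P; rewrite det_tr Hdz.
pose w := v^T.
have Hw : Mz *m w = 0 by rewrite /w -[Mz]trmxK -trmx_mul Hv trmx0.
have [i0 Hi0] : exists i0, v 0 i0 != 0.
  move/matrix0Pn: Hv0 => [i [j Hij]]; exists j; by rewrite -(ord1 i).
pose a0 := v 0 i0.
pose V0 : 'M[C]_d := \matrix_(i, kk) (if kk == i0 then v 0 i else (i == kk)%:R).
pose W0 : 'M[C]_d := \matrix_(i, kk)
  (if kk == i0 then (if i == i0 then a0^-1 else - v 0 i / a0) else (i == kk)%:R).
have HVW : V0 *m W0 = 1%:M.
  apply/matrixP => i kk; rewrite !mxE (bigD1 i0) //= !mxE eqxx.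
  case: (eqVneq kk i0) => [->|Hk].
    rewrite (eq_bigr (fun l => if i == l then - v 0 i / a0 else 0)); last first.
      move=> l Hl; rewrite !mxE (negbTE Hl) eqxx; case: (eqVneq i l) => [->|_].
        by rewrite mul1r.
      by rewrite mul0r.
    case: (eqVneq i i0) => [->|Hi].
      rewrite big1 ?addr0; first by rewrite mulfV.
      by move=> l /negbTE Hl; rewrite eq_sym Hl.
    rewrite (bigD1 i) //= eqxx big1 ?addr0.
      by rewrite mulNr subrr.
    by move=> l /andP [_]; rewrite eq_sym => /negbTE ->.
  rewrite mulr0 add0r.
  rewrite (eq_bigr (fun l => if l == kk then (i == kk)%:R else 0)); last first.
    move=> l Hl; rewrite !mxE (negbTE Hl) (negbTE Hk).
    case: (eqVneq l kk) => [->|Hlk]; first by rewrite mulr1.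
    by rewrite mulr0.
  by rewrite (bigD1 kk) //= eqxx big1 ?addr0 // => l /andP [_ /negbTE ->].
pose Vp := map_mx polyC V0.
pose Wp := map_mx polyC W0.
have HVWp : Vp *m Wp = 1%:M by rewrite -map_mxM HVW map_mx1.
pose MV := M *m Vp.
have Hroot : forall i, root (MV i i0) z.
  move=> i; apply/rootP; rewrite /MV mxE horner_sum.
  have := congr1 (fun A : 'cV[C]_d => A i 0) Hw; rewrite !mxE => H0.
  rewrite -[X in _ = X]H0; apply: eq_bigr => l _; rewrite /Mz /Vp !mxE eqxx hornerM hornerC.
  by rewrite horner_evalE.
pose M' : 'M[{poly C}]_d := \matrix_(i, kk)
  (if kk == i0 then MV i i0 %/ ('X - z%:P) else MV i kk).
have HM'D : M' *m Dg z i0 = MV.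
  rewrite /Dg mul_mx_diag; apply/matrixP => i kk; rewrite !mxE.
  case: (eqVneq kk i0) => [->|_]; last by rewrite mulr1.
  by rewrite divpK // dvdp_XsubCl; have := Hroot i; rewrite /MV mxE.
have HM : M = M' *m Dg z i0 *m Wp.
  by rewrite HM'D /MV -mulmxA HVWp mulmx1.
have HdetV : \det Vp = (\det V0)%:P by rewrite det_map_mx.
have HV0 : \det V0 != 0.
  by have [] := mulmx1_unit HVW; rewrite unitmxE unitfE.
have HdetD : \det (Dg z i0) = 'X - z%:P.
  rewrite det_diag (bigD1 i0) //= big1 ?mulr1 ?mxE ?eqxx //.
  by move=> kk /negbTE Hk; rewrite mxE Hk.
have HdM' : \det M' = ('X - z%:P) ^+ k * (h * (\det V0)%:P).
  apply: (@mulIf _ ('X - z%:P)); first by rewrite polyXsubC_eq0.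
  rewrite /= -HdetD -det_mulmx HM'D /MV det_mulmx Hd HdetV HdetD exprSr.
  ring.
have Hh' : ~~ root (h * (\det V0)%:P) z by rewrite rootM negb_or Hh rootC HV0.
have IHk := IH M' _ HdM' Hh' (ltnW HkN).
have HWu : Mat z N Wp \in unitmx.
  have HWV : Wp *m Vp = 1%:M by apply: mulmx1C.
  case: (@mulmx1_unit _ _ (Mat z N Wp) (Mat z N Vp)) => //.
  by rewrite -Mat_mul // HWV Mat1.
rewrite HM !Mat_mul // dimker_mulU //.
set A := Mat z N M'; set B := Mat z N (Dg z i0).
have HB : dimker B = 1%N by apply: Dg_dimker => //; apply: leq_ltn_trans HkN.
have Hsub : (kermx A^T <= B^T)%MS.
  apply/row_subP => i; set r := row i (kermx A^T).
  have HAr : A *m r^T = 0 := KROW (row_sub i _).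
  have H1 : actM M' (combc z r^T) = fun _ => 0 by rewrite actM_combc // HAr combc0.
  have H2 := KER HdM' Hh' H1 (comb_killed Hz _).
  have [u Hu] := ker_inT Hz H2.
  have [c' Hc'] := Dg_pre Hz i0 u HkN.
  have HBc : B *m c' = r^T.
    by apply: (combc_injP Hz); rewrite -actM_combc // Hc' -Hu.
  by rewrite -[r]trmxK -HBc trmx_mul submxMl.
have Hcap : \rank (B^T :&: kermx A^T) = \rank (kermx A^T).
  apply/eqP; rewrite eqn_leq !mxrankS ?capmxSr //.
  by rewrite sub_capmx Hsub submx_refl.
have Hmk := mxrank_mul_ker B^T (kermx A^T).
have := mxrank_mul_ker B^T A^T.
rewrite Hcap -/(dimker A) IHk -trmx_mul mxrank_tr => Hr.
have HkB : (k <= \rank B^T)%N by rewrite -IHk /dimker mxrankS.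
move: HB Hr HkB; rewrite !dimkerE mxrank_tr.
have := rank_leq_row B.
exact: arith_aux.
Qed.

End LocalThm.

Section Decomp.
Variable C : numClosedFieldType.
Variable n : nat.
Variable z : 'I_n -> C.
Variable s : 'I_n -> nat.
Hypothesis Hinj : injective z.

Definition G l : {poly C} := ('X - (z l)%:P) ^+ s l.
Definition H l : {poly C} := \prod_(l' | l' != l) G l'.
Definition Gall : {poly C} := \prod_l G l.

Lemma coprimeG l l' : l != l' -> coprimep (G l) (G l').
Proof.
move=> Hll; rewrite /G coprimep_expl // coprimep_expr // coprimep_XsubC2 //.
by rewrite subr_eq0; apply/eqP => /Hinj E; rewrite E eqxx in Hll.
Qed.

Lemma coprimeGH l : coprimep (G l) (H l).
Proof.
apply: (big_ind (fun q => coprimep (G l) q)) => //.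
- exact: coprimep1.
- by move=> x y Hx Hy; rewrite coprimepMr Hx Hy.
- by move=> l' Hl'; apply: coprimeG; rewrite eq_sym.
Qed.

Lemma GH l : G l * H l = Gall.
Proof. by rewrite /Gall (bigD1 l). Qed.

Lemma dvd_GH l l' : l' != l -> G l %| H l'.
Proof.
move=> Hl; rewrite /H (bigD1 l) /=; first by apply: dvdp_mulr; exact: dvdpp.
by rewrite eq_sym.
Qed.

Lemma prod_dvd f : (forall l, G l %| f) -> Gall %| f.
Proof.
move=> Hf; rewrite /Gall.
have : uniq (index_enum 'I_n) by apply: index_enum_uniq.
elim: (index_enum 'I_n) => [|a r IH] /=; first by rewrite big_nil dvd1p.
move=> /andP [Har Hu]; rewrite big_cons Gauss_dvdp ?Hf ?IH //.
rewrite big_seq; apply: (big_ind (fun q => coprimep (G a) q)) => //.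
- exact: coprimep1.
- by move=> x y Hx Hy; rewrite coprimepMr Hx Hy.
- by move=> l Hl; apply: coprimeG; apply/eqP => E; rewrite E Hl in Har.
Qed.

Lemma idempotents : exists e : 'I_n -> {poly C},
  (forall l, G l %| e l - 1) /\ (forall l l', l' != l -> G l %| e l') /\
  (forall l, exists r, G l * e l = r * Gall) /\ (Gall %| \sum_l e l - 1).
Proof.
have [u Hu] := fin_all_exists (fun l => (Bezout_eq1_coprimepP _ _ (coprimeGH l))).
exists (fun l => (u l).2 * H l).
have H1 : forall l, G l %| (u l).2 * H l - 1.
  move=> l; have -> : (u l).2 * H l - 1 = (- (u l).1) * G l.
    by rewrite -(Hu l); ring.
  by rewrite dvdp_mull.
have H2 : forall l l', l' != l -> G l %| (u l').2 * H l'.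
  by move=> l l' Hl; rewrite dvdp_mull // dvd_GH.
split; first exact: H1.
split; first exact: H2.
split.
  by move=> l; exists (u l).2; rewrite -(GH l); ring.
apply: prod_dvd => l.
rewrite (bigD1 l) //=.
set S := \sum_(i < n | i != l) _.
have -> : (u l).2 * H l + S - 1 = ((u l).2 * H l - 1) + S by ring.
apply: dvdp_add; first exact: H1.
apply: (big_ind (fun q => G l %| q)) => //.
  by move=> x y Hx Hy; rewrite dvdp_add.
move=> l' Hl'; exact: H2.
Qed.

Variable V : lmodType C.

Lemma act_dvd f g (x : int -> V) : g %| f -> act g x = (fun _ => 0) -> act f x = (fun _ => 0).
Proof.
move=> /dvdpP [r ->] Hg; rewrite act_mul Hg.
by apply: functional_extensionality => j; rewrite act_zero.
Qed.

End Decomp.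

Section E0.
Variable C : numClosedFieldType.
Variables (d : nat) (p q : int) (a : int -> 'M[C]_d).

Definition E0 N : 'M[C]_(\sum_(i < N) d, d) :=
  \mxcol_(v < N) ((if (v : nat) == 0%N then 1%:M else 0) : 'M[C]_d).

Lemma Ader0 zz : Ader p q a 0 zz = Aeval p q a zz.
Proof. by rewrite /Ader /Aeval; apply: eq_bigr => i _; rewrite ffz0 mul1r subr0. Qed.

Lemma E0w N (w : 'cV[C]_d) : E0 N *m w = \mxcol_(v < N) (if (v : nat) == 0%N then w else 0).
Proof.
rewrite /E0 mxcol_mul; apply: eq_mxcol => v; case: ifP => _; by rewrite ?mul1mx ?mul0mx.
Qed.

Lemma Ablk_E0 zz N (w : 'cV[C]_d) : Aeval p q a zz *m w = 0 ->
  Ablk p q a zz N *m (E0 N *m w) = 0.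
Proof.
move=> Hw; rewrite -(submxcolK (Ablk p q a zz N *m (E0 N *m w))) -(mxcol0 (p_ := fun _ => d) 1).
apply: eq_mxcol => x; rewrite Ablk_mul big1 // => v _.
rewrite E0w mxcolK; case: (eqVneq (v : nat) 0%N) => [Hv0|_]; last by rewrite mulmx0.
case: ifP => Hx; last by rewrite mul0mx.
have Hx0 : x = 0%N :> nat by move: Hx; rewrite Hv0 leqn0 => /eqP.
by rewrite Hv0 Hx0 subnn bin0 scale1r Ader0 Hw.
Qed.

Lemma combc_E0 zz N (HN : (0 < N)%N) (w : 'cV[C]_d) :
  combc zz (E0 N *m w) = fun j => Phi zz 1 j *: w.
Proof.
rewrite E0w combcE; apply: functional_extensionality => j.
rewrite /comb (bigD1 (Ordinal HN)) //= big1 ?addr0 //.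
move=> v Hv; have -> : ((v : nat) == 0%N) = false.
  by apply/negbTE; apply: contra Hv => /eqP Hv; apply/eqP/val_inj.
by rewrite scaler0.
Qed.

Lemma E0_free N (HN : (0 < N)%N) : row_free (E0 N)^T.
Proof.
have H1 : (E0 N)^T *m E0 N = 1%:M.
  rewrite /E0 tr_mxcol mul_mxrow_mxcol (bigD1 (Ordinal HN)) //= big1 ?addr0.
    by rewrite trmx1 mul1mx.
  move=> v Hv; have -> : ((v : nat) == 0%N) = false.
    by apply/negbTE; apply: contra Hv => /eqP Hv; apply/eqP/val_inj.
  by rewrite trmx0 mul0mx.
rewrite /row_free eqn_leq rank_leq_row /=.
by rewrite -{1}(mxrank1 C d) -H1 mxrankM_maxl.
Qed.

End E0.

Section Final.
Variable C : numClosedFieldType.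
Variables (d : nat) (p q : int) (a : int -> 'M[C]_d) (n : nat) (c : C) (s0 : nat)
  (z : 'I_n -> C) (s : 'I_n -> nat).
Hypothesis Hc : c != 0.
Hypothesis Hz : forall l, z l != 0.
Hypothesis Hinj : injective z.
Hypothesis Hs : forall l, (0 < s l)%N.
Hypothesis Hdet : detpoly p q a = c *: ('X^s0 * \prod_(l < n) ('X - (z l)%:P) ^+ s l).

Local Notation P := (shiftpoly p q a).

Lemma BBL_P psi j : BBL p q a psi j = actM P psi (j + p).
Proof.
apply: BBL_actM.
- by move=> i k; rewrite /shiftpoly mxE; exact: size_poly.
- by move=> i k t Ht; rewrite /shiftpoly mxE coef_poly Ht.
Qed.

Lemma inker_iff psi : inker p q a psi <-> actM P psi = (fun _ => 0).
Proof.
split => H.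
  apply: functional_extensionality => j; have := H (j - p); by rewrite BBL_P subrK.
by move=> j; rewrite BBL_P H.
Qed.

Lemma detP : \det P = c *: ('X^s0 * Gall z s).
Proof. by rewrite -Hdet. Qed.

Lemma ker_G psi : inker p q a psi -> act (Gall z s) psi = (fun _ => 0).
Proof.
move/inker_iff/actM_det; rewrite detP -mul_polyC act_mul act_mul => H.
apply: functional_extensionality => j.
have := congr1 (fun f : int -> 'cV[C]_d => f (j - s0%:Z)) H.
rewrite actC actXn subrK => /eqP; rewrite scaler_eq0 (negbTE Hc) /= => /eqP.
done.
Qed.

Lemma BBL_sum (Psis : 'I_n -> int -> 'cV[C]_d) j :
  BBL p q a (fun j => \sum_l Psis l j) j = \sum_l BBL p q a (Psis l) j.
Proof.
rewrite /BBL; under eq_bigr do rewrite mulmx_sumr.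
by rewrite exchange_big.
Qed.

Lemma Ablk_ker_iff zz N (cv : 'cV[C]_(\sum_(i < N) d)) : zz != 0 ->
  Ablk p q a zz N *m cv = 0 <-> inker p q a (combc zz cv).
Proof.
move=> Hzz; split.
  by move=> H j; rewrite BBL_combc // H combc0.
move=> H; apply: (combc_inj Hzz); rewrite -BBL_combc //.
by apply: functional_extensionality => j; rewrite H.
Qed.

Lemma Gl_root l : \det P = ('X - (z l)%:P) ^+ s l * (c *: ('X^s0 * H z s l)).
Proof. by rewrite detP -(GH z s l) /G; rewrite -scalerAr; congr (_ *: _); ring. Qed.

Lemma Gl_noroot l : ~~ root (c *: ('X^s0 * H z s l)) (z l).
Proof.
rewrite rootZ // rootM negb_or; apply/andP; split.
  by rewrite /root hornerXn expf_neq0.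
rewrite /root /H horner_prod; apply/prodf_neq0 => l' Hl'.
rewrite /G horner_exp hornerXsubC expf_neq0 // subr_eq0.
by apply: contra Hl' => /eqP /Hinj ->.
Qed.

Lemma dim_Ablk l : dimker (Ablk p q a (z l) (s l)) = s l.
Proof.
rewrite -[in RHS](local_dim (Hz l) (Gl_root l) (Gl_noroot l) (leqnn _)).
apply: dimker_eq => cv.
rewrite Ablk_ker_iff // inker_iff actM_combc //.
split => H.
  by apply: (combc_inj (Hz l)); rewrite -H.
by rewrite H combc0.
Qed.

Lemma dim_ineq l : (dimker (Aeval p q a (z l)) <= dimker (Ablk p q a (z l) (s l)))%N.
Proof.
set K := kermx (Aeval p q a (z l))^T.
have HK : (K *m (E0 C d (s l))^T <= kermx (Ablk p q a (z l) (s l))^T)%MS.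
  apply/row_subP => i; apply: KROW'; rewrite row_mul trmx_mul trmxK.
  apply: Ablk_E0; apply: KROW; exact: row_sub.
rewrite /dimker -/K -(mxrankMfree K (@E0_free C d (s l) (Hs l))).
exact: mxrankS.
Qed.


Section WithE.
Variable e : 'I_n -> {poly C}.
Hypothesis He1 : forall l, G z s l %| e l - 1.
Hypothesis He2 : forall l l', l' != l -> G z s l %| e l'.
Hypothesis He3 : forall l, exists r, G z s l * e l = r * Gall z s.
Hypothesis He4 : Gall z s %| \sum_l e l - 1.

Lemma decomp (psi : int -> 'cV[C]_d) : act (Gall z s) psi = (fun _ => 0) ->
  psi = fun j => \sum_l act (e l) psi j.
Proof.
move=> HG; have := act_dvd He4 HG => H1.
apply: functional_extensionality => j.
have := congr1 (fun f : int -> 'cV[C]_d => f j) H1; rewrite /= actD act_sumf.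
rewrite -polyCN actC scaleN1r => /eqP; rewrite addr_eq0 opprK => /eqP <-.
by [].
Qed.

Lemma piece_inT l (psi : int -> 'cV[C]_d) : act (Gall z s) psi = (fun _ => 0) ->
  inT (z l) (s l) (act (e l) psi).
Proof.
move=> HG; have [r Hr] := He3 l.
have : act (G z s l) (act (e l) psi) = fun _ => 0.
  by rewrite -act_mul Hr act_mul HG; apply: functional_extensionality => j; rewrite act_zero.
move/(ker_inT (Hz l)) => [u Hu]; exists u => j; by rewrite Hu.
Qed.

Lemma piece_ker l (psi : int -> 'cV[C]_d) : inker p q a psi -> inker p q a (act (e l) psi).
Proof.
move/inker_iff => H; apply/inker_iff.
by rewrite actM_act H; apply: functional_extensionality => j; rewrite act_zero.
Qed.

Lemma inT_killed l (psi : int -> 'cV[C]_d) : inT (z l) (s l) psi ->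
  act (G z s l) psi = (fun _ => 0).
Proof.
move=> [u Hu]; have -> : psi = comb (z l) u by apply: functional_extensionality.
exact: comb_killed.
Qed.

Lemma inT_proj l (psi : int -> 'cV[C]_d) : inT (z l) (s l) psi ->
  (forall l', l' != l -> act (e l') psi = (fun _ => 0)) /\ act (e l) psi = psi.
Proof.
move=> HT; have HG := inT_killed HT.
have Hoth : forall l', l' != l -> act (e l') psi = (fun _ => 0).
  by move=> l' Hl'; apply: (act_dvd (He2 Hl')) HG.
split => //.
have HGall : act (Gall z s) psi = (fun _ => 0).
  by apply: (act_dvd _ HG); rewrite -(GH z s l); apply: dvdp_mulr; exact: dvdpp.
rewrite {2}(decomp HGall); apply: functional_extensionality => j.
rewrite (bigD1 l) //= big1 ?addr0 // => l' Hl'; by rewrite Hoth.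
Qed.

End WithE.

Lemma combc_sum zz N (I : finType) (F : I -> 'cV[C]_(\sum_(i < N) d)) j :
  combc zz (\sum_i F i) j = \sum_i combc zz (F i) j.
Proof.
rewrite /combc /comb; under eq_bigr do rewrite submxcol_sum scaler_sumr.
by rewrite exchange_big.
Qed.

Theorem main_sec :
  ((forall Psi, inker p q a Psi ->
      exists Psis : 'I_n -> int -> 'cV[C]_d,
        (forall l, inker p q a (Psis l) /\ inT (z l) (s l) (Psis l)) /\
        (forall j, Psi j = \sum_(l < n) Psis l j)) /\
   (forall Psis : 'I_n -> int -> 'cV[C]_d,
      (forall l, inker p q a (Psis l) /\ inT (z l) (s l) (Psis l)) ->
      inker p q a (fun j => \sum_(l < n) Psis l j)) /\
   (forall Psis : 'I_n -> int -> 'cV[C]_d,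
      (forall l, inker p q a (Psis l) /\ inT (z l) (s l) (Psis l)) ->
      (forall j, \sum_(l < n) Psis l j = 0) ->
      forall l j, Psis l j = 0) /\
   ((forall l (u : 'I_(s l) -> 'cV[C]_d),
      (forall j, comb (z l) u j = 0) -> forall v, u v = 0) /\
   (forall l (u : 'I_(s l) -> 'cV[C]_d),
      inker p q a (comb (z l) u) <->
      Ablk p q a (z l) (s l) *m \mxcol_(v < s l) u v = 0)) /\
   (exists (m : nat) (B : 'I_m -> int -> 'cV[C]_d),
      (forall i, inker p q a (B i)) /\
      (forall Psi, inker p q a Psi ->
         exists cc : 'I_m -> C, forall j, Psi j = \sum_(i < m) cc i *: B i j))) /\
   (forall l, (dimker (Aeval p q a (z l)) <= dimker (Ablk p q a (z l) (s l)))%N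
              /\ dimker (Ablk p q a (z l) (s l)) = s l)
   /\
   (forall l, dimker (Aeval p q a (z l)) = s l ->
      forall (m : nat) (u : 'I_m -> 'cV[C]_d),
        (forall i, Aeval p q a (z l) *m u i = 0) ->
        (forall w : 'cV[C]_d, Aeval p q a (z l) *m w = 0 ->
           exists cc : 'I_m -> C, w = \sum_(i < m) cc i *: u i) ->
        (forall cc : 'I_m -> C, \sum_(i < m) cc i *: u i = 0 -> forall i, cc i = 0) ->
        forall Psi : int -> 'cV[C]_d,
          (inker p q a Psi /\ inT (z l) (s l) Psi) <->
          exists cc : 'I_m -> C,
            forall j, Psi j = \sum_(i < m) cc i *: (Phi (z l) 1 j *: u i)).
Proof.
have [e [He1 [He2 [He3 He4]]]] := @idempotents C n z s Hinj.
have Ia : forall Psi, inker p q a Psi ->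
      exists Psis : 'I_n -> int -> 'cV[C]_d,
        (forall l, inker p q a (Psis l) /\ inT (z l) (s l) (Psis l)) /\
        (forall j, Psi j = \sum_(l < n) Psis l j).
  move=> Psi HPsi; exists (fun l => act (e l) Psi); split.
    move=> l; split; first exact: piece_ker.
    by apply: piece_inT => //; exact: ker_G.
  by move=> j; rewrite {1}(decomp He4 (ker_G HPsi)).
split; [split; [exact: Ia | split; [| split; [| split; [split|]]]] | split].
- move=> Psis HPs j; rewrite BBL_sum big1 // => l _.
  by case: (HPs l) => Hk _; apply: Hk.
- move=> Psis HPs Hsum l j.
  have [_ Hself] := inT_proj He2 He4 (proj2 (HPs l)).
  rewrite -Hself.
  have -> : act (e l) (Psis l) j = act (e l) (fun j => \sum_l' Psis l' j) j.
    rewrite act_sum (bigD1 l) //= big1 ?addr0 // => l' Hl'.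
    have [Ho _] := inT_proj He2 He4 (proj2 (HPs l')).
    by rewrite (Ho l) // eq_sym.
  have -> : (fun j => \sum_l' Psis l' j) = fun _ => 0.
    by apply: functional_extensionality => j'; rewrite Hsum.
  by rewrite act_zero.
- move=> l u Hu v; exact: (comb_inj (Hz l) (functional_extensionality _ _ Hu) v).
- move=> l u; split.
    by move=> H; apply/(Ablk_ker_iff _ (Hz l)); rewrite combcE.
  by move/(Ablk_ker_iff _ (Hz l)); rewrite combcE.
- pose ml := fun l => (\sum_(i < s l) d)%N.
  pose K := fun l => kermx (Ablk p q a (z l) (s l))^T.
  pose I := {l : 'I_n & 'I_(ml l)}.
  pose Bf := fun x : I => combc (z (tag x)) (row (tagged x) (K (tag x)))^T.
  exists #|{: I}|, (fun i => Bf (enum_val i)); split.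
    move=> i; rewrite /Bf; apply/(Ablk_ker_iff _ (Hz _)); apply: KROW; exact: row_sub.
  move=> Psi HPsi.
  have [Psis [HPs Hsum]] := Ia Psi HPsi.
  have : forall l, exists D : 'rV[C]_(ml l), forall j,
      Psis l j = \sum_(r < ml l) D 0 r *: combc (z l) (row r (K l))^T j.
    move=> l; case: (HPs l) => Hk [u Hu].
    have HA : Ablk p q a (z l) (s l) *m \mxcol_v u v = 0.
      apply/(Ablk_ker_iff _ (Hz l)); rewrite combcE.
      by have -> : comb (z l) u = Psis l by apply: functional_extensionality => j; rewrite Hu.
    have : ((\mxcol_v u v)^T <= K l)%MS by apply: KROW'; rewrite trmxK.
    move/submxP => [D HD]; exists D => j.
    rewrite Hu -combcE -[\mxcol_v u v]trmxK HD mulmx_sum_row linear_sum combc_sum.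
    by apply: eq_bigr => r _; rewrite linearZ combcZ.
  move/fin_all_exists => [D HD].
  exists (fun i => D (tag (enum_val i)) 0 (tagged (enum_val i))) => j.
  rewrite Hsum; under eq_bigr do rewrite HD.
  rewrite -(big_enum_val (A := {: I}) (fun x : I => D (tag x) 0 (tagged x) *: Bf x j)).
  rewrite (sig_big_dep xpredT (fun _ => xpredT) (fun l r => D l 0 r *: combc (z l) (row r (K l))^T j)).
  by apply: eq_bigr.
- by move=> l; split; [exact: dim_ineq | exact: dim_Ablk].
- move=> l Heq m u Hu Hspan _ Psi.
  set Ae := Aeval p q a (z l); set Ab := Ablk p q a (z l) (s l).
  set K' := kermx Ae^T *m (E0 C d (s l))^T.
  have HK' : (K' <= kermx Ab^T)%MS.
    apply/row_subP => i; apply: KROW'; rewrite row_mul trmx_mul trmxK.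
    apply: Ablk_E0; apply: KROW; exact: row_sub.
  have Hr : \rank K' = \rank (kermx Ab^T).
    rewrite /K' (mxrankMfree _ (@E0_free C d (s l) (Hs l))).
    by rewrite -/(dimker Ae) -/(dimker Ab) Heq dim_Ablk.
  have Hsub : (kermx Ab^T <= K')%MS.
    have [_ Heqv] := mxrank_leqif_eq HK'.
    by move: Heqv; rewrite Hr eqxx => /esym/andP [].
  split.
    move=> [HPk [u0 Hu0]].
    have Hfun : Psi = comb (z l) u0 by apply: functional_extensionality.
    have HA : Ab *m \mxcol_v u0 v = 0.
      by apply/(Ablk_ker_iff _ (Hz l)); rewrite combcE -Hfun.
    have : ((\mxcol_v u0 v)^T <= K')%MS.
      by apply: submx_trans Hsub; apply: KROW'; rewrite trmxK.
    move/submxP => [D HD].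
    set w := (D *m kermx Ae^T)^T.
    have Hw : Ae *m w = 0 by apply: KROW; exact: submxMl.
    have Hcol : \mxcol_v u0 v = E0 C d (s l) *m w.
      by rewrite -[\mxcol_v u0 v]trmxK HD /K' mulmxA trmx_mul trmxK.
    have [cc Hcc] := Hspan w Hw.
    exists cc => j.
    rewrite Hfun -combcE Hcol combc_E0 // Hcc scaler_sumr.
    by apply: eq_bigr => i _; rewrite !scalerA mulrC.
  move=> [cc Hcc].
  set w := \sum_(i < m) cc i *: u i.
  have Hw : Ae *m w = 0.
    rewrite /w mulmx_sumr big1 // => i _; by rewrite -scalemxAr Hu scaler0.
  have Hfun : Psi = combc (z l) (E0 C d (s l) *m w).
    apply: functional_extensionality => j; rewrite combc_E0 // Hcc /w scaler_sumr.
    by apply: eq_bigr => i _; rewrite !scalerA mulrC.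
  split.
    by rewrite Hfun; apply/(Ablk_ker_iff _ (Hz l)); apply: Ablk_E0.
  by exists (fun v => @submxcol _ _ (fun _ => d) 1 (E0 C d (s l) *m w) v) => j; rewrite Hfun.
Qed.

End Final.


Theorem mainTheorem8 (C : numClosedFieldType) (d : nat) (p q : int)
  (a : int -> 'M[C]_d) (n : nat) (c : C) (s0 : nat)
  (z : 'I_n -> C) (s : 'I_n -> nat) :
  (0 < d)%N -> p <= q -> a p != 0 -> a q != 0 ->
  regular p q a ->
  c != 0 -> (forall l, z l != 0) -> injective z -> (forall l, 0 < s l)%N ->
  detpoly p q a = c *: ('X^s0 * \prod_(l < n) ('X - (z l)%:P) ^+ s l) ->
  ((* (i) ker A = sum of the ker A /\ T_{z_l,s_l} ... *)
   (forall Psi, inker p q a Psi ->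
      exists Psis : 'I_n -> int -> 'cV[C]_d,
        (forall l, inker p q a (Psis l) /\ inT (z l) (s l) (Psis l)) /\
        (forall j, Psi j = \sum_(l < n) Psis l j)) /\
   (forall Psis : 'I_n -> int -> 'cV[C]_d,
      (forall l, inker p q a (Psis l) /\ inT (z l) (s l) (Psis l)) ->
      inker p q a (fun j => \sum_(l < n) Psis l j)) /\
   (* ... and the sum is direct *)
   (forall Psis : 'I_n -> int -> 'cV[C]_d,
      (forall l, inker p q a (Psis l) /\ inT (z l) (s l) (Psis l)) ->
      (forall j, \sum_(l < n) Psis l j = 0) ->
      forall l j, Psis l j = 0) /\
   (* the map (u_v)_v |-> sum_v Phi_{z,v} u_v is injective (an isomorphism
      onto T_{z,s}) and ker A /\ T_{z_l,s_l} corresponds to ker A_{s_l}(z_l) *)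
   ((forall l (u : 'I_(s l) -> 'cV[C]_d),
      (forall j, comb (z l) u j = 0) -> forall v, u v = 0) /\
   (forall l (u : 'I_(s l) -> 'cV[C]_d),
      inker p q a (comb (z l) u) <->
      Ablk p q a (z l) (s l) *m \mxcol_(v < s l) u v = 0)) /\
   (* ker A is finite-dimensional *)
   (exists (m : nat) (B : 'I_m -> int -> 'cV[C]_d),
      (forall i, inker p q a (B i)) /\
      (forall Psi, inker p q a Psi ->
         exists cc : 'I_m -> C, forall j, Psi j = \sum_(i < m) cc i *: B i j))) /\
   (* (ii) *)
   (forall l, (dimker (Aeval p q a (z l)) <= dimker (Ablk p q a (z l) (s l)))%N
              /\ dimker (Ablk p q a (z l) (s l)) = s l)
   /\ (* moreover *)
   (forall l, dimker (Aeval p q a (z l)) = s l ->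
      forall (m : nat) (u : 'I_m -> 'cV[C]_d),
        (forall i, Aeval p q a (z l) *m u i = 0) ->
        (forall w : 'cV[C]_d, Aeval p q a (z l) *m w = 0 ->
           exists cc : 'I_m -> C, w = \sum_(i < m) cc i *: u i) ->
        (forall cc : 'I_m -> C, \sum_(i < m) cc i *: u i = 0 -> forall i, cc i = 0) ->
        forall Psi : int -> 'cV[C]_d,
          (inker p q a Psi /\ inT (z l) (s l) Psi) <->
          exists cc : 'I_m -> C,
            forall j, Psi j = \sum_(i < m) cc i *: (Phi (z l) 1 j *: u i)).
Proof.
move=> _ _ _ _ _ Hc Hz Hinj Hs Hdet.
exact: (@main_sec C d p q a n c s0 z s Hc Hz Hinj Hs Hdet).
Qed.
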